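(* Let $\Gamma$ be a Neumaier graph with parameters $(n,k,\lambda;a,c)$. If $\lambda=0$, then $c=2$, $a=1$, and $\Gamma$ is the complete bipartite graph $K_{k,k}$. Moreover, if $c=2$, then $a=1$, $\lambda=0$, and $\Gamma$ is the complete bipartite graph $K_{k,k}$.
   Context: All graphs are finite, simple, undirected and connected. A graph is edge-regular with parameters $(n,k,\lambda)$ if it has $n$ vertices, is $k$-regular, and any two adjacent vertices have exactly $\lambda$ common neighbours. A clique $C$ is a regular clique with nexus $a$ if every vertex not in $C$ has exactly $a$ neighbours in $C$. A Neumaier graph is a non-complete edge-regular graph containing a regular clique; in a Neumaier graph all regular cliques have the same size $c$ and the same nexus $a$, and the graph is said to have parameters $(n,k,\lambda;a,c)$ if it is edge-regular with parameters $(n,k,\lambda)$ and contains a regular clique of size $c$ with nexus $a$. *)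

(* Defs.v *)
From mathcomp Require Import all_boot.
Set Implicit Arguments. Unset Strict Implicit. Unset Printing Implicit Defensive.

Definition simple_graph (T : finType) (e : rel T) : Prop :=
  symmetric e /\ irreflexive e.

Definition connected_graph (T : finType) (e : rel T) : Prop :=
  forall x y : T, connect e x y.

Definition complete_graph (T : finType) (e : rel T) : Prop :=
  forall x y : T, x != y -> e x y.

Definition nbhd (T : finType) (e : rel T) (x : T) : {set T} := [set y | e x y].

Definition edge_regular (T : finType) (e : rel T) (n k lambda : nat) : Prop :=
  #|T| = n /\
  (forall x : T, #|nbhd e x| = k) /\
  (forall x y : T, e x y -> #|nbhd e x :&: nbhd e y| = lambda).

Definition is_clique (T : finType) (e : rel T) (C : {set T}) : Prop :=
  0 < #|C| /\ {in C &, forall x y, x != y -> e x y}.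

Definition regular_clique (T : finType) (e : rel T) (C : {set T}) (a : nat) : Prop :=
  is_clique e C /\ forall x : T, x \notin C -> #|nbhd e x :&: C| = a.

Definition neumaier_params (T : finType) (e : rel T) (n k lambda a c : nat) : Prop :=
  simple_graph e /\ connected_graph e /\ ~ complete_graph e /\
  edge_regular e n k lambda /\
  exists C : {set T}, regular_clique e C a /\ #|C| = c.

Definition is_K_kk (T : finType) (e : rel T) (k : nat) : Prop :=
  exists A : {set T}, #|A| = k /\ #|~: A| = k /\
    forall x y : T, e x y = ((x \in A) != (y \in A)).

(* Main.v *)
Require Import Defs.
From mathcomp Require Import all_boot.
From mathcomp Require Import zify.

Lemma sub_eq_card (T : finType) (A B : {set T}) :
  A \subset B -> #|B| <= #|A| -> A = B.
Proof. by move=> h1 h2; apply/eqP; rewrite eqEcard h1 h2. Qed.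

Lemma Kkk_of (T : finType) (e : rel T) (n k : nat) (x y : T) :
  simple_graph e -> edge_regular e n k 0 ->
  regular_clique e [set x; y] 1 -> x != y -> e x y -> is_K_kk e k.
Proof.
move=> [sym irr] [_ [deg lam]] [[_ cl] nex] xy exy.
have eyx : e y x by rewrite sym.
have tri : forall u v w, e u v -> e u w -> e v w -> False.
  move=> u v w euv euw evw.
  have := lam u v euv; have : w \in nbhd e u :&: nbhd e v.
    by rewrite !inE euw evw.
  by move=> wi /eqP; rewrite cards_eq0 => /eqP h; rewrite h inE in wi.
have CA : ~: nbhd e y = nbhd e x.
  apply/setP => z; rewrite !inE.
  case ezx: (e x z); case ezy: (e y z) => //=.
    by case: (tri _ _ _ exy ezx ezy).
  have zx : z != x by apply/eqP => h; rewrite h eyx in ezy.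
  have zy : z != y by apply/eqP => h; rewrite h exy in ezx.
  have zC : z \notin [set x; y] by rewrite !inE negb_or zx zy.
  have := nex z zC.
  have -> : nbhd e z :&: [set x; y] = set0.
    apply/setP => w; rewrite !inE.
    apply/negbTE/negP => /andP [ezw /orP [/eqP ew|/eqP ew]]; subst w.
      by rewrite sym ezx in ezw.
    by rewrite sym ezy in ezw.
  by rewrite cards0.
exists (nbhd e y); split; first exact: deg.
split; first by rewrite CA deg.
move=> u v.
case uA: (u \in nbhd e y).
  have : nbhd e u = ~: nbhd e y.
    apply: sub_eq_card; last by rewrite CA !deg.
    apply/subsetP => w; rewrite !inE => euw; apply/negP => eyw.
    rewrite inE in uA.
    exact: (tri y u w uA eyw euw).
  by move/setP/(_ v); rewrite !inE => ->.
have uB : u \in nbhd e x by rewrite -CA inE uA.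
have : nbhd e u = nbhd e y.
  apply: sub_eq_card; last by rewrite !deg.
  apply/subsetP => w; rewrite !inE => euw; apply/negPn/negP => eyw.
  have : w \in nbhd e x by rewrite -CA !inE eyw.
  rewrite inE in uB; rewrite inE => exw.
  exact: (tri x u w uB exw euw).
move/setP/(_ v); rewrite !inE => ->; by case: (e y v).
Qed.

Theorem lemma3p1 (T : finType) (e : rel T) (n k lambda a c : nat) :
  neumaier_params e n k lambda a c ->
  (lambda = 0 -> c = 2 /\ a = 1 /\ is_K_kk e k) /\
  (c = 2 -> a = 1 /\ lambda = 0 /\ is_K_kk e k).
Proof.
move=> [[sym irr] [conn [ncomp [[cardT [deg lam]] [C [[[c0 cl] nex] cC]]]]]].
have [u [v [uv nuv]]] : exists u v, u != v /\ ~~ e u v.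
  case: (boolP [exists u, exists v, (u != v) && ~~ e u v]).
    by move=> /existsP [p /existsP [q /andP [pq npq]]]; exists p, q.
  move/existsPn => h; exfalso; apply: ncomp => p q pq.
  by have := h p; move/existsPn/(_ q); rewrite pq /= negbK.
have [z zC] : exists z, z \notin C.
  case uC: (u \in C); last by exists u; rewrite uC.
  case vC: (v \in C); last by exists v; rewrite vC.
  by rewrite (cl u v uC vC uv) in nuv.
have [x0 x0C] : exists x0, x0 \in C by apply/card_gt0P.
have a0 : 0 < a.
  rewrite lt0n; apply/negP => /eqP a0.
  have cls : closed e C.
    move=> p q epq.
    case pC: (p \in C); case qC: (q \in C) => //.
      have := nex q (negbT qC); rewrite a0 => /eqP; rewrite cards_eq0 => /eqP/setP/(_ p).
      by rewrite !inE sym epq pC.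
    have := nex p (negbT pC); rewrite a0 => /eqP; rewrite cards_eq0 => /eqP/setP/(_ q).
    by rewrite !inE epq qC.
  have := closed_connect cls (conn x0 z).
  by rewrite x0C (negbTE zC).
have part2 : c = 2 -> a = 1 /\ lambda = 0 /\ is_K_kk e k.
  move=> c2.
  have [x [y [xy Cxy]]] : exists x y, x != y /\ C = [set x; y].
    by apply/cards2P; rewrite cC c2.
  subst C.
  have exy : e x y by apply: cl => //; rewrite !inE eqxx ?orbT.
  have a2 : a <= 2.
    rewrite -(nex z zC) -c2 -cC; exact: subset_leq_card (subsetIr _ _).
  have aa : a = 1.
    case: (ltngtP a 1) => //; first by lia.
    move=> a1; have {a2} a2 : a = 2 by lia.
    have full : forall w, w \notin [set x; y] -> [set x; y] \subset nbhd e w.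
      move=> w wC; apply/setIidPr; apply/eqP; rewrite eqEcard subsetIr /=.
      by rewrite (nex w wC) cC c2 a2.
    have exz : forall w, w != x -> e x w.
      move=> w wx; case: (eqVneq w y) => [->|wy] //.
      have wC : w \notin [set x; y] by rewrite !inE negb_or wx wy.
      have := subsetP (full w wC) x; rewrite !inE eqxx /= sym; exact.
    have nx : nbhd e x = [set~ x].
      apply/setP => w; rewrite !inE; case: (eqVneq w x) => [->|wx]; first by rewrite irr.
      exact: exz.
    have kk : k = #|T|.-1 by rewrite -(deg x) nx cardsC1.
    exfalso; apply: ncomp => p q pq.
    have np : nbhd e p = [set~ p].
      apply: sub_eq_card; last by rewrite cardsC1 deg kk.
      by apply/subsetP => w; rewrite !inE; apply: contraTneq => ->; rewrite irr.
    by move/setP/(_ q): np; rewrite !inE eq_sym pq.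
  have l0 : lambda = 0.
    rewrite -(lam x y exy); apply/eqP; rewrite cards_eq0; apply/eqP/setP => w.
    rewrite !inE; apply/negbTE/negP => /andP [exw eyw].
    have wx : w != x by apply: contraTneq exw => ->; rewrite irr.
    have wy : w != y by apply: contraTneq eyw => ->; rewrite irr.
    have wC : w \notin [set x; y] by rewrite !inE negb_or wx wy.
    have := nex w wC.
    have -> : nbhd e w :&: [set x; y] = [set x; y].
      apply/setIidPr/subsetP => t; rewrite !inE => /orP [/eqP ->|/eqP ->]; by rewrite sym.
    by rewrite cards2 xy aa.
  split => //; split => //.
  apply: (@Kkk_of T e n k x y) => //.
  - split => //; split => //; subst lambda; exact: lam.
  - by rewrite -aa; split.
split => // l0.
have c2 : c = 2.
  have cle : c <= 2.
    rewrite leqNgt; apply/negP => c3.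
    have h1 : 1 < #|C :\ x0| by move: c3; rewrite -cC (cardsD1 x0) x0C; lia.
    have [y0 y0C] : exists y0, y0 \in C :\ x0 by apply/card_gt0P; lia.
    have [w wC] : exists w, w \in C :\ x0 :\ y0.
      by apply/card_gt0P; move: h1; rewrite (cardsD1 y0) y0C; lia.
    move: y0C wC; rewrite !inE => /andP [y0x y0C] /andP [wy0 /andP [wx wC]].
    have exy : e x0 y0 by apply: cl; rewrite // eq_sym.
    have := lam x0 y0 exy; rewrite l0 => /eqP; rewrite cards_eq0 => /eqP/setP/(_ w).
    rewrite !inE (cl x0 w) // ?(eq_sym x0) // (cl y0 w) // eq_sym //.
  have : c != 1.
    apply/negP => /eqP c1.
    have [x1 Cx] : exists x1, C = [set x1] by apply/cards1P; rewrite cC c1.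
    subst C.
    have a1 : a = 1.
      have : a <= 1 by rewrite -(nex z zC) -c1 -cC; exact: subset_leq_card (subsetIr _ _).
      lia.
    have ex1 : forall w, w != x1 -> e x1 w.
      move=> w wx; have wC : w \notin [set x1] by rewrite inE.
      have := nex w wC; rewrite a1 => /eqP/cards1P [t ht].
      have := set11 t; rewrite -ht !inE => /andP [ewt /eqP tx].
      by rewrite sym -tx.
    have ux : u != x1.
      by apply/eqP => ux; move: nuv uv; rewrite ux => nuv uv; rewrite ex1 // eq_sym in nuv.
    have vx : v != x1.
      by apply/eqP => vx; move: nuv uv; rewrite vx => nuv uv; rewrite sym ex1 in nuv.
    have k2 : 2 <= k.
      rewrite -(deg x1); have <- : #|[set u; v]| = 2 by rewrite cards2 uv. apply: subset_leq_card.
      by apply/subsetP => t; rewrite !inE => /orP [/eqP ->|/eqP ->]; apply: ex1.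
    have k1 : k <= 1.
      rewrite -(deg u) -(cards1 x1); apply: subset_leq_card.
      apply/subsetP => t; rewrite !inE => eut; apply/negPn/negP => tx.
      have := lam x1 u (ex1 u ux); rewrite l0 => /eqP; rewrite cards_eq0 => /eqP/setP/(_ t).
      by rewrite !inE eut ex1.
    lia.
  have : c != 0 by rewrite -cC -lt0n.
  lia.
by have [h1 [h2 h3]] := part2 c2.
Qed.
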